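(* Let $m>a\geq0$ and $n>b\geq0$ be integers, and let $\mathcal{C}_{\mathsf{col}}$ be a linear $[m,a]$ code and $\mathcal{C}_{\mathsf{row}}$ a linear $[n,b]$ code over a finite field $\mathbb{F}$. Then the set of maximal erasure patterns correctable by the tensor-product code $\mathsf{TP}(\mathcal{C}_{\mathsf{col}},\mathcal{C}_{\mathsf{row}})$ is a subset of $$\{([m]\times[n])\setminus\mathcal{E}\ \mid\ \mathcal{E}\in\mathbb{E}^{\max}_{m\times n}(a,b,0)\}.$$ Moreover, if $\mathsf{TP}(\mathcal{C}_{\mathsf{col}},\mathcal{C}_{\mathsf{row}})^\perp\in\mathbb{C}^{\mathsf{MR}}_{m\times n}(a,b,0)$, then $\mathsf{TP}(\mathcal{C}_{\mathsf{col}},\mathcal{C}_{\mathsf{row}})$ corrects all erasure patterns in this set.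
   Context: For linear codes $\mathcal{C}_{\mathsf{col}}$ ($[m,a]$) and $\mathcal{C}_{\mathsf{row}}$ ($[n,b]$) over $\mathbb{F}$ with full-rank parity-check matrices $\mathbf{H}_{\mathsf{col}}$, $\mathbf{H}_{\mathsf{row}}$, the tensor-product code $\mathsf{TP}(\mathcal{C}_{\mathsf{col}},\mathcal{C}_{\mathsf{row}})$ is the $[mn,mn-(m-a)(n-b)]$ code that is the dual of the row span of $\mathbf{H}_{\mathsf{col}}\otimes\mathbf{H}_{\mathsf{row}}$ (Kronecker product). Positions of vectors in $\mathbb{F}^{mn}$ are identified with $[m]\times[n]$, $[k]=\{1,\dots,k\}$. A linear code corrects an erasure pattern $\mathcal{E}$ (a set of positions) if no two distinct codewords agree on all positions outside $\mathcal{E}$; a maximal erasure pattern correctable by a code is a correctable pattern not properly contained in another pattern correctable by that code. For linear codes $\mathcal{D}_1\subseteq\mathbb{F}^m,\mathcal{D}_2\subseteq\mathbb{F}^n$, $\mathcal{D}_1\otimes\mathcal{D}_2$ is the row span of the Kronecker product of their generator matrices. A code for the topology $T_{m\times n}(a,b,0)$ is a linear code over a finite field whose parity-check matrix is a parity-check matrix of $\mathcal{D}_{\mathsf{col}}\otimes\mathcal{D}_{\mathsf{row}}$, where $\mathcal{D}_{\mathsf{col}}$ is a linear $[m,\geq m-a]$ code and $\mathcal{D}_{\mathsf{row}}$ a linear $[n,\geq n-b]$ code; $\mathbb{C}_{m\times n}(a,b,0)$ is the set of these codes (over any finite field). $\mathcal{E}$ is correctable in $T_{m\times n}(a,b,0)$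 if some code in $\mathbb{C}_{m\times n}(a,b,0)$ corrects it; $\mathbb{E}_{m\times n}(a,b,0)$ is the set of such patterns and $\mathbb{E}^{\max}_{m\times n}(a,b,0)$ the set of those not properly contained in another correctable pattern. A code in $\mathbb{C}_{m\times n}(a,b,0)$ is maximally recoverable if it corrects every pattern in $\mathbb{E}_{m\times n}(a,b,0)$; $\mathbb{C}^{\mathsf{MR}}_{m\times n}(a,b,0)$ is the set of such codes. *)

(* Defs.v *)
From HB Require Import structures.
From mathcomp Require Import all_boot all_order all_algebra.
Set Implicit Arguments. Unset Strict Implicit. Unset Printing Implicit Defensive.
Import GRing.Theory.
Local Open Scope ring_scope.

(* Conventions.
   - A linear code of length N over F is the row space of a matrix
     C : 'M[F]_(k, N) (mxalgebra); its codewords are the row vectors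
     x : 'rV[F]_N with (x <= C)%MS; its dimension is \rank C.
   - Coordinates of F^(m*n) are identified with positions [m] x [n]
     through mathcomp's mxvec_index (row-major vectorization);
     [m] = 'I_m (0-based). *)

Definition pos_of (m n : nat) (k : 'I_(m * n)) : 'I_m * 'I_n :=
  enum_val (cast_ord (esym (mxvec_cast m n)) k).

Definition kron (F : fieldType) (p q m n : nat)
    (A : 'M[F]_(p, m)) (B : 'M[F]_(q, n)) : 'M[F]_(p * q, m * n) :=
  \matrix_(r, c) (A (pos_of r).1 (pos_of c).1 * B (pos_of r).2 (pos_of c).2).

Definition dual_code (F : fieldType) (k N : nat) (C : 'M[F]_(k, N)) : 'M[F]_N :=
  kermx C^T.

(* TP(C_col, C_row) := dual of the row span of Hcol (x) Hrow *)
Definition TP (F : fieldType) (m n ra rb : nat)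
    (Hcol : 'M[F]_(ra, m)) (Hrow : 'M[F]_(rb, n)) : 'M[F]_(m * n) :=
  dual_code (kron Hcol Hrow).

Definition corrects (F : fieldType) (m n k : nat) (C : 'M[F]_(k, m * n))
    (E : {set 'I_m * 'I_n}) : Prop :=
  forall x y : 'rV[F]_(m * n), (x <= C)%MS -> (y <= C)%MS ->
    (forall i j, (i, j) \notin E ->
       x 0 (mxvec_index i j) = y 0 (mxvec_index i j)) ->
    x = y.

Definition max_correctable (F : fieldType) (m n k : nat) (C : 'M[F]_(k, m * n))
    (E : {set 'I_m * 'I_n}) : Prop :=
  corrects C E /\ forall E' : {set 'I_m * 'I_n}, E \proper E' -> ~ corrects C E'.

(* C is a code for the topology T_{m x n}(a,b,0):
   C = D_col (x) D_row (as codes, i.e. same row space) with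
   D_col a linear [m, >= m-a] code and D_row a linear [n, >= n-b] code. *)
Definition topo_code (F : fieldType) (m n a b k : nat) (C : 'M[F]_(k, m * n)) : Prop :=
  exists (k1 k2 : nat) (Dcol : 'M[F]_(k1, m)) (Drow : 'M[F]_(k2, n)),
    (m - a <= \rank Dcol)%N /\ (n - b <= \rank Drow)%N /\
    (C == kron Dcol Drow)%MS.

Definition topo_correctable (m n a b : nat) (E : {set 'I_m * 'I_n}) : Prop :=
  exists (F : finFieldType) (k : nat) (C : 'M[F]_(k, m * n)),
    topo_code a b C /\ corrects C E.

Definition topo_max_correctable (m n a b : nat) (E : {set 'I_m * 'I_n}) : Prop :=
  topo_correctable a b E /\
  forall E' : {set 'I_m * 'I_n}, E \proper E' -> ~ topo_correctable a b E'.

Definition topo_MR (F : fieldType) (m n a b k : nat) (C : 'M[F]_(k, m * n)) : Prop :=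
  topo_code a b C /\
  forall E : {set 'I_m * 'I_n}, topo_correctable a b E -> corrects C E.

(* Main.v *)
From HB Require Import structures.
From mathcomp Require Import all_boot all_order all_algebra zify.
Require Import Defs.
Set Implicit Arguments. Unset Strict Implicit. Unset Printing Implicit Defensive.
Import GRing.Theory.
Local Open Scope ring_scope.

Section Supp.
Variables (F : fieldType) (N : nat).

Definition VS (S : {set 'I_N}) : 'M[F]_(#|S|, N) :=
  rowsub (fun i : 'I_#|S| => enum_val i) 1%:M.

Definition supp_in (S : {set 'I_N}) (x : 'rV[F]_N) := forall k, k \notin S -> x 0 k = 0.
Definition cor k (C : 'M[F]_(k, N)) S :=
  forall x : 'rV_N, (x <= C)%MS -> supp_in S x -> x = 0.

Lemma VS_entry S i k : VS S i k = (enum_val i == k)%:R.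
Proof. by rewrite /VS !mxE. Qed.

Lemma VS_supp S x : (x <= VS S)%MS <-> supp_in S x.
Proof.
split.
- case/submxP=> y ->{x} k kS; rewrite mxE big1 // => i _.
  rewrite VS_entry; case: eqP => [e|_]; last by rewrite mulr0.
  by rewrite -e enum_valP in kS.
- move=> sx; rewrite [x]matrix_sum_delta.
  apply: summx_sub => i _; apply: summx_sub => j _; rewrite (ord1 i).
  case: (boolP (j \in S)) => jS; last by rewrite sx // scale0r sub0mx.
  apply: scalemx_sub.
  have -> : delta_mx 0 j = row (enum_rank_in jS j) (VS S).
    apply/rowP => l; rewrite !mxE enum_rankK_in // eqxx /=.
    by rewrite eq_sym.
  exact: row_sub.
Qed.

Lemma rank_VS S : \rank (VS S) = #|S|.
Proof.
apply/eqP; rewrite eqn_leq rank_leq_row /=.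
have h : VS S *m (VS S)^T = 1%:M.
  apply/matrixP => i j; rewrite !mxE (bigD1 (enum_val i)) //= big1.
    rewrite !mxE eqxx mul1r addr0 (inj_eq enum_val_inj) eq_sym.
    by [].
  move=> l nl; rewrite !mxE eq_sym (negbTE nl) mul0r //.
by rewrite -{1}(mxrank1 F #|S|) -h mxrankM_maxl.
Qed.

Lemma supp_mulT S x : supp_in (~: S) x -> x *m (VS S)^T = 0.
Proof.
move=> sx; apply/rowP => i; rewrite !mxE big1 // => k _.
rewrite !mxE; case: eqP => [e|_]; last by rewrite mulr0.
by rewrite sx ?mul0r // in_setC -e enum_valP.
Qed.

Lemma cor_cap k (C : 'M[F]_(k, N)) S : cor C S -> (C :&: VS S)%MS = 0.
Proof.
move=> h; apply/eqP; rewrite -submx0; apply/row_subP => i.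
rewrite submx0; apply/eqP; apply: h.
  exact: submx_trans (row_sub i _) (capmxSl _ _).
by apply/VS_supp; exact: submx_trans (row_sub i _) (capmxSr _ _).
Qed.

Lemma cor_rank k (C : 'M[F]_(k, N)) S : cor C S -> (\rank C + #|S| <= N)%N.
Proof.
by move=> h; rewrite -rank_VS -mxrank_disjoint_sum ?cor_cap // rank_leq_col.
Qed.

Lemma cor_dual k (C : 'M[F]_(k, N)) S :
  cor C S -> (\rank C + #|S|)%N = N -> cor (dual_code C) (~: S).
Proof.
move=> h hr x; rewrite /dual_code => /sub_kermxP xC sx.
have xV := supp_mulT sx.
have e : x *m (col_mx C (VS S))^T = 0 by rewrite tr_col_mx mul_mx_row xC xV row_mx0.
have fr : row_free (col_mx C (VS S))^T.
  rewrite /row_free mxrank_tr -(eqmx_rank (introT eqmxP (addsmxE C (VS S)))).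
  by rewrite mxrank_disjoint_sum ?cor_cap // rank_VS hr.
by apply: (row_free_inj fr); rewrite e mul0mx.
Qed.

Lemma cor_ext k (C : 'M[F]_(k, N)) S :
  cor C S -> (\rank C + #|S| < N)%N -> exists p, p \notin S /\ cor C (p |: S).
Proof.
move=> h hr.
have [p np] : exists p, ~~ ((delta_mx 0 p : 'rV[F]_N) <= C + VS S)%MS.
  case: (pickP (fun p => ~~ ((delta_mx 0 p : 'rV[F]_N) <= C + VS S)%MS)) => [p np|all].
    by exists p.
  have : (1%:M <= C + VS S)%MS.
    by apply/row_subP => i; rewrite row1; apply/negbFE; exact: all.
  move/mxrankS; rewrite mxrank1 mxrank_disjoint_sum ?cor_cap // rank_VS.
  by move=> hh; have := leq_ltn_trans hh hr; rewrite ltnn.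
exists p; split.
  apply: contra np => pS; apply: submx_trans (addsmxSr _ _).
  apply/VS_supp => l lS; rewrite mxE eqxx /=; case: eqP => // e.
  by rewrite e pS in lS.
move=> x xC sx.
have c0 : x 0 p = 0.
  apply/eqP/negP => nz; move: np; apply/negP/negPn.
  set c := x 0 p; set y := x - c *: delta_mx 0 p.
  have yS : (y <= VS S)%MS.
    apply/VS_supp => l lS; rewrite /y !mxE eqxx /=.
    case: eqP => [->|nl]; first by rewrite mulr1 subrr.
    by rewrite mulr0 subr0 sx // in_setU1 negb_or lS andbT; apply/eqP.
  have -> : delta_mx 0 p = c^-1 *: (x - y).
    rewrite /y opprB addrC subrK scalerA mulVf; first by rewrite scale1r. by apply/negP.
  apply: scalemx_sub; apply: addmx_sub.
    exact: submx_trans xC (addsmxSl _ _).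
  by rewrite eqmx_opp; exact: submx_trans yS (addsmxSr _ _).
apply: h => // l lS; case: (eqVneq l p) => [->//|nl].
by apply: sx; rewrite in_setU1 negb_or nl.
Qed.

Lemma cor_max k (C : 'M[F]_(k, N)) S : cor C S ->
  exists S' : {set 'I_N}, S \subset S' /\ cor C S' /\ (\rank C + #|S'|)%N = N.
Proof.
move Hd : (N - (\rank C + #|S|))%N => d.
elim: d S Hd => [|d IH] S Hd h.
  exists S; split=> //; split=> //; have := cor_rank h; lia.
have [p [pS h']] := cor_ext h (ltac:(lia)).
have [S' [s1 [s2 s3]]] := IH (p |: S) (ltac:(rewrite cardsU1 pS; lia)) h'.
exists S'; split=> //; apply: subset_trans s1; exact: subsetUr.
Qed.

Lemma cor_eqmx k1 k2 (C : 'M[F]_(k1, N)) (D : 'M[F]_(k2, N)) S :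
  (C == D)%MS -> cor C S -> cor D S.
Proof.
move=> /andP [_ DC] h x xD; apply: h; exact: submx_trans xD DC.
Qed.

Lemma rank_dual k (C : 'M[F]_(k, N)) : \rank (dual_code C) = (N - \rank C)%N.
Proof. by rewrite /dual_code mxrank_ker mxrank_tr. Qed.

Lemma dual_dual k (C : 'M[F]_(k, N)) : (C == dual_code (dual_code C))%MS.
Proof.
have s : (C <= dual_code (dual_code C))%MS.
  apply/sub_kermxP; rewrite -[C in C *m _]trmxK -trmx_mul mulmx_ker trmx0 //.
rewrite -(mxrank_leqif_eq s) !rank_dual.
have := rank_leq_col C; lia.
Qed.

End Supp.

Lemma pos_ofK m n (i : 'I_m) (j : 'I_n) : pos_of (mxvec_index i j) = (i, j).
Proof. by rewrite /pos_of /mxvec_index cast_ordK enum_rankK. Qed.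

Definition vidx m n (u : 'I_m * 'I_n) : 'I_(m * n) := mxvec_index u.1 u.2.

Lemma pos_ofK' m n : cancel (@vidx m n) (@pos_of m n).
Proof. by case=> i j; rewrite /vidx pos_ofK. Qed.

Lemma vidxK m n : cancel (@pos_of m n) (@vidx m n).
Proof. by move=> k; case/mxvec_indexP: k => i j; rewrite /vidx pos_ofK. Qed.

Section Kron.
Variable F : fieldType.

Lemma kron_mul p q m n r s (A : 'M[F]_(p, m)) (B : 'M[F]_(q, n))
  (C : 'M[F]_(m, r)) (D : 'M[F]_(n, s)) :
  kron A B *m kron C D = kron (A *m C) (B *m D).
Proof.
apply/matrixP => i j; rewrite !mxE.
rewrite (reindex (@vidx m n)) /=; last first.
  by exists (@pos_of m n) => u _; rewrite ?pos_ofK' ?vidxK.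
rewrite big_distrlr /= pair_big /=.
apply: eq_bigr => [[k1 k2]] _; rewrite !mxE pos_ofK' /=.
by rewrite mulrACA.
Qed.

Lemma kron1 m n : kron (1%:M : 'M[F]_m) (1%:M : 'M[F]_n) = 1%:M.
Proof.
apply/matrixP => i j; rewrite !mxE.
have -> : (i == j) = (pos_of i == pos_of j) by rewrite (can_eq (@vidxK m n)).
case: (pos_of i) => i1 i2; case: (pos_of j) => j1 j2 /=.
rewrite xpair_eqE.
by case: (i1 == j1); case: (i2 == j2); rewrite /= ?mulr1 ?mulr0 ?mul0r.
Qed.

Lemma rank_kron_ge p q m n (A : 'M[F]_(p, m)) (B : 'M[F]_(q, n)) :
  (\rank A * \rank B <= \rank (kron A B))%N.
Proof.
have [X eX] : exists X, row_base A = X *m A.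
  by apply/submxP; rewrite eq_row_base.
have [Y eY] : exists Y, row_base B = Y *m B.
  by apply/submxP; rewrite eq_row_base.
have [A' eA] := row_freeP (row_base_free A).
have [B' eB] := row_freeP (row_base_free B).
have h : kron (row_base A) (row_base B) *m kron A' B' = 1%:M.
  by rewrite kron_mul eA eB kron1.
apply: leq_trans (_ : \rank (kron (row_base A) (row_base B)) <= _)%N.
  by rewrite -{1}(mxrank1 F (\rank A * \rank B)) -h mxrankM_maxl.
by rewrite eX eY -kron_mul mxrankM_maxr.
Qed.

End Kron.

Lemma corrects_cor (F : fieldType) m n k (C : 'M[F]_(k, m * n))
  (E : {set 'I_m * 'I_n}) : corrects C E <-> cor C ((@pos_of m n) @^-1: E).
Proof.
split.
  move=> h x xC sx; apply: (h x 0 xC (sub0mx _ _)) => i j nE.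
  by rewrite mxE sx // inE pos_ofK.
move=> h x y xC yC ag; apply/eqP; rewrite -subr_eq0; apply/eqP; apply: h.
  by apply: addmx_sub => //; rewrite eqmx_opp.
move=> l; rewrite inE => nk.
have := ag (pos_of l).1 (pos_of l).2; rewrite -surjective_pairing.
by move/(_ nk); rewrite -[mxvec_index _ _]/(vidx (pos_of l)) vidxK !mxE => ->; rewrite subrr.
Qed.

Lemma card_pre m n (E : {set 'I_m * 'I_n}) : #|(@pos_of m n) @^-1: E| = #|E|.
Proof.
have -> : (@pos_of m n) @^-1: E = (@vidx m n) @: E.
  apply/setP => k; rewrite inE; apply/idP/imsetP => [kE|[u uE ->]].
    by exists (pos_of k) => //; rewrite vidxK.
  by rewrite pos_ofK'.
exact: card_imset (can_inj (@pos_ofK' m n)).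
Qed.

Lemma max_card (F : fieldType) m n k (C : 'M[F]_(k, m * n))
  (E : {set 'I_m * 'I_n}) (P : {set 'I_m * 'I_n} -> Prop) :
  corrects C E -> (forall E2 : {set 'I_m * 'I_n}, corrects C E2 -> P E2) ->
  (forall E2 : {set 'I_m * 'I_n}, E \proper E2 -> ~ P E2) ->
  (\rank C + #|E|)%N = (m * n)%N.
Proof.
move=> cE hP hmax.
have [S' [s1 [s2 s3]]] := cor_max (proj1 (corrects_cor C E) cE).
set E2 := (@vidx m n) @^-1: S'.
have eS : (@pos_of m n) @^-1: E2 = S' by apply/setP => k'; rewrite !inE vidxK.
have c2 : corrects C E2 by apply/corrects_cor; rewrite eS.
have sub : E \subset E2.
  apply/subsetP => u uE; rewrite inE; apply: (subsetP s1); by rewrite inE pos_ofK'.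
have : ~~ (E \proper E2) by apply/negP => pr; exact: hmax _ pr (hP _ c2).
rewrite properE sub /= negbK => s2E.
have -> : #|E| = #|S'|.
  by rewrite -eS card_pre; apply/eqP; rewrite eqn_leq !subset_leq_card.
exact: s3.
Qed.

Theorem theorem5 (F : finFieldType) (m n a b : nat)
    (Ccol : 'M[F]_m) (Crow : 'M[F]_n)
    (Hcol : 'M[F]_(m - a, m)) (Hrow : 'M[F]_(n - b, n)) :
  (a < m)%N -> (b < n)%N ->
  \rank Ccol = a -> \rank Crow = b ->
  row_free Hcol -> row_free Hrow ->
  (Ccol == kermx Hcol^T)%MS -> (Crow == kermx Hrow^T)%MS ->
  (forall E : {set 'I_m * 'I_n},
     max_correctable (TP Hcol Hrow) E ->
     exists E', topo_max_correctable a b E' /\ E = ~: E') /\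
  (topo_MR a b (dual_code (TP Hcol Hrow)) ->
     forall E' : {set 'I_m * 'I_n},
       topo_max_correctable a b E' -> corrects (TP Hcol Hrow) (~: E')).
Proof.
move=> _ _ _ _ fHc fHr _ _.
set K := kron Hcol Hrow.
have TPE : TP Hcol Hrow = dual_code K by [].
have dTP : (dual_code (TP Hcol Hrow) == K)%MS.
  by rewrite TPE; case/andP: (dual_dual K) => h1 h2; apply/andP; split.
have topoT : topo_code a b (dual_code (TP Hcol Hrow)).
  exists (m - a)%N, (n - b)%N, Hcol, Hrow; split; [|split].
  - by rewrite (eqP fHc).
  - by rewrite (eqP fHr).
  - exact: dTP.
have bound : forall E'' : {set 'I_m * 'I_n}, topo_correctable a b E'' ->
    (#|E''| + (m - a) * (n - b) <= m * n)%N.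
  move=> E'' [F'' [k'' [C'' [[k1 [k2 [D1 [D2 [r1 [r2 e]]]]]] cE]]]].
  have := cor_rank (proj1 (corrects_cor C'' E'') cE).
  rewrite card_pre (eqmx_rank e).
  have := rank_kron_ge D1 D2; have := leq_mul r1 r2; lia.
have rK : (\rank K <= (m - a) * (n - b))%N by exact: rank_leq_row.
have rTP : \rank (TP Hcol Hrow) = (m * n - \rank K)%N by rewrite TPE rank_dual.
have rKN : (\rank K <= m * n)%N by exact: rank_leq_col.
have cardC : forall E : {set 'I_m * 'I_n}, (#|E| + #|~: E|)%N = (m * n)%N.
  by move=> E; rewrite cardsC card_prod !card_ord.
split.
  move=> E [cE hmax].
  have hr := max_card (P := corrects (TP Hcol Hrow)) cE (fun _ h => h) hmax.
  exists (~: E); split; last by rewrite setCK.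
  split.
    exists F, (m * n)%N, (dual_code (TP Hcol Hrow)); split => //.
    apply/corrects_cor; rewrite preimsetC; apply: cor_dual.
      exact: (proj1 (corrects_cor _ _) cE).
    by rewrite card_pre.
  move=> E'' pr tc.
  have := bound _ tc; have := proper_card pr; have := cardC E; lia.
move=> [_ hall] E' [tcE' hmaxE'].
have cE := hall E' tcE'.
have hr := max_card (P := topo_correctable a b) cE
  (fun E2 h => ex_intro _ F (ex_intro _ (m * n)%N
     (ex_intro _ (dual_code (TP Hcol Hrow)) (conj topoT h)))) hmaxE'.
apply/corrects_cor; rewrite preimsetC.
apply: (cor_eqmx (C := dual_code (dual_code (TP Hcol Hrow)))).
  by case/andP: (dual_dual (TP Hcol Hrow)) => h1 h2; apply/andP; split.
apply: cor_dual; first exact: (proj1 (corrects_cor _ _) cE).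
by rewrite card_pre.
Qed.
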